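(* Every pointed stable double category is a stable squares category.
   Context: A double category $\mathbb{C}$ has objects, horizontal morphisms ($\rightarrowtail$, category $\mathcal{H}_{\mathbb{C}}$), vertical morphisms ($\twoheadrightarrow$, category $\mathcal{V}_{\mathbb{C}}$), and squares with associative unital compositions. It is pointed if it has a distinguished object $O$ initial in $\mathcal{H}_{\mathbb{C}}$ and terminal in $\mathcal{V}_{\mathbb{C}}$. It is stable if the maps from the set of squares to the set of spans (pairs $A\rightarrowtail B$, $A\twoheadrightarrow C$) and to the set of cospans (pairs $B\twoheadrightarrow D$, $C\rightarrowtail D$), sending a square to its top-left span, resp. bottom-right cospan, are bijections. A double category is flat if squares are determined by their boundary; a squares category is a flat double category with a distinguished object $O$ initial in $\mathcal{H}_{\mathbb{C}}$ and terminal in $\mathcal{V}_{\mathbb{C}}$. A vertical $f:A\twoheadrightarrow B$ is a vertical weak equivalence if the boundary (top $O\rightarrowtail A$, left $\mathrm{id}_O$, right $f$, bottom $O\rightarrowtail B$) is a square. Vertical natural transformations between double functors of flat double categories: vertical components $\tau_A$ such that $(Ff,\tau_A,\tau_{A'},Gf)$ is a square for every horizontal $f$, and naturality squares commute in the vertical category for vertical morphisms; $\mathrm{Fun}^v$ denotes the resulting functor category. Let $\boxdot$ be the flat double category generated by one square with corners $a,b,c,d$ (horizontal $a\rightarrowtail b$, $c\rightarrowtail d$; vertical $a\twoheadrightarrow c$, $b\twoheadrightarrow d$), $i:\mathrm{span}\hookrightarrow\boxdot$ the sub-double category on $a\rightarrowtail b,a\twoheadrightarrow c$, and $j:\mathrm{cospan}\hookrightarrow\boxdot$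 the one on $b\twoheadrightarrow d,c\rightarrowtail d$. A squares category is stable if: (i) $i^*:\mathrm{Fun}^v(\boxdot,\mathbb{C})\to\mathrm{Fun}^v(\mathrm{span},\mathbb{C})$ has a section functor $s$; (ii) there is a natural transformation $w:si^*\Rightarrow\mathrm{id}$ whose component at each square is the identity at $a,b,c$; (iii) $j^*:\mathrm{Fun}^v(\boxdot,\mathbb{C})\to\mathrm{Fun}^v(\mathrm{cospan},\mathbb{C})$ has a section functor $t$; (iv) there is a natural transformation $u:tj^*\Rightarrow\mathrm{id}$ whose component at each square is the identity at $b,c,d$ and whose $a$-component is a vertical weak equivalence. *)

(* Defs.v *)
(* Strict double categories, presented "set-theoretically": each of the four
   kinds of cells (objects, horizontal morphisms, vertical morphisms, squares)
   is a type, with source/target (boundary) maps and TOTAL composition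
   operations whose values are only specified on composable pairs.
   All compositions are written in diagrammatic order:
     hcomp f g  =  "f then g"   (f : A >-> B, g : B >-> C  gives  A >-> C). *)

Set Implicit Arguments.

Record DoubleCat := {
  Ob  : Type;
  Hor : Type;
  Ver : Type;
  Sq  : Type;

  hsrc : Hor -> Ob;  htgt : Hor -> Ob;
  hid : Ob -> Hor;   hcomp : Hor -> Hor -> Hor;
  hsrc_id : forall A, hsrc (hid A) = A;
  htgt_id : forall A, htgt (hid A) = A;
  hsrc_comp : forall f g, htgt f = hsrc g -> hsrc (hcomp f g) = hsrc f;
  htgt_comp : forall f g, htgt f = hsrc g -> htgt (hcomp f g) = htgt g;
  hcomp_idl : forall f, hcomp (hid (hsrc f)) f = f;
  hcomp_idr : forall f, hcomp f (hid (htgt f)) = f;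
  hcompA : forall f g k, htgt f = hsrc g -> htgt g = hsrc k ->
             hcomp (hcomp f g) k = hcomp f (hcomp g k);

  vsrc : Ver -> Ob;  vtgt : Ver -> Ob;
  vid : Ob -> Ver;   vcomp : Ver -> Ver -> Ver;
  vsrc_id : forall A, vsrc (vid A) = A;
  vtgt_id : forall A, vtgt (vid A) = A;
  vsrc_comp : forall f g, vtgt f = vsrc g -> vsrc (vcomp f g) = vsrc f;
  vtgt_comp : forall f g, vtgt f = vsrc g -> vtgt (vcomp f g) = vtgt g;
  vcomp_idl : forall f, vcomp (vid (vsrc f)) f = f;
  vcomp_idr : forall f, vcomp f (vid (vtgt f)) = f;
  vcompA : forall f g k, vtgt f = vsrc g -> vtgt g = vsrc k ->
             vcomp (vcomp f g) k = vcomp f (vcomp g k);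

  (* boundary of a square:      top
                             A >----> B
                        left |        | right
                             v        v
                             C >----> D
                               bottom                  *)
  top : Sq -> Hor;  bottom : Sq -> Hor;
  left : Sq -> Ver; right : Sq -> Ver;
  bd_a : forall s, hsrc (top s) = vsrc (left s);
  bd_b : forall s, htgt (top s) = vsrc (right s);
  bd_c : forall s, hsrc (bottom s) = vtgt (left s);
  bd_d : forall s, htgt (bottom s) = vtgt (right s);

  sq_hid : Ver -> Sq;
  sq_vid : Hor -> Sq;
  sq_hid_bd : forall g, top (sq_hid g) = hid (vsrc g) /\ bottom (sq_hid g) = hid (vtgt g)
                        /\ left (sq_hid g) = g /\ right (sq_hid g) = g;
  sq_vid_bd : forall f, top (sq_vid f) = f /\ bottom (sq_vid f) = f
                        /\ left (sq_vid f) = vid (hsrc f) /\ right (sq_vid f) = vid (htgt f);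

  sq_hcomp : Sq -> Sq -> Sq;
  sq_vcomp : Sq -> Sq -> Sq;
  sq_hcomp_bd : forall s t, right s = left t ->
      top (sq_hcomp s t) = hcomp (top s) (top t) /\
      bottom (sq_hcomp s t) = hcomp (bottom s) (bottom t) /\
      left (sq_hcomp s t) = left s /\ right (sq_hcomp s t) = right t;
  sq_vcomp_bd : forall s t, bottom s = top t ->
      left (sq_vcomp s t) = vcomp (left s) (left t) /\
      right (sq_vcomp s t) = vcomp (right s) (right t) /\
      top (sq_vcomp s t) = top s /\ bottom (sq_vcomp s t) = bottom t;

  sq_hcompA : forall s t u, right s = left t -> right t = left u ->
      sq_hcomp (sq_hcomp s t) u = sq_hcomp s (sq_hcomp t u);
  sq_vcompA : forall s t u, bottom s = top t -> bottom t = top u ->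
      sq_vcomp (sq_vcomp s t) u = sq_vcomp s (sq_vcomp t u);
  sq_hcomp_idl : forall s, sq_hcomp (sq_hid (left s)) s = s;
  sq_hcomp_idr : forall s, sq_hcomp s (sq_hid (right s)) = s;
  sq_vcomp_idl : forall s, sq_vcomp (sq_vid (top s)) s = s;
  sq_vcomp_idr : forall s, sq_vcomp s (sq_vid (bottom s)) = s;

  sq_id_id : forall A, sq_hid (vid A) = sq_vid (hid A);
  sq_hid_comp : forall g g', vtgt g = vsrc g' ->
      sq_hid (vcomp g g') = sq_vcomp (sq_hid g) (sq_hid g');
  sq_vid_comp : forall f f', htgt f = hsrc f' ->
      sq_vid (hcomp f f') = sq_hcomp (sq_vid f) (sq_vid f');
  interchange : forall s t u v,
      right s = left t -> right u = left v -> bottom s = top u -> bottom t = top v ->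
      sq_vcomp (sq_hcomp s t) (sq_hcomp u v) = sq_hcomp (sq_vcomp s u) (sq_vcomp t v)
}.

Arguments hsrc {d}. Arguments htgt {d}. Arguments hid {d}. Arguments hcomp {d}.
Arguments vsrc {d}. Arguments vtgt {d}. Arguments vid {d}. Arguments vcomp {d}.
Arguments top {d}. Arguments bottom {d}. Arguments left {d}. Arguments right {d}.

Section Defs.
Variable C : DoubleCat.

Definition is_square (t : Hor C) (l r : Ver C) (b : Hor C) : Prop :=
  exists s : Sq C, top s = t /\ left s = l /\ right s = r /\ bottom s = b.

Definition h_initial (O : Ob C) : Prop :=
  forall A : Ob C,
    (exists f : Hor C, hsrc f = O /\ htgt f = A) /\
    (forall f f' : Hor C, hsrc f = O -> htgt f = A -> hsrc f' = O -> htgt f' = A -> f = f').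
Definition v_terminal (O : Ob C) : Prop :=
  forall A : Ob C,
    (exists g : Ver C, vsrc g = A /\ vtgt g = O) /\
    (forall g g' : Ver C, vsrc g = A -> vtgt g = O -> vsrc g' = A -> vtgt g' = O -> g = g').

Definition pointed (O : Ob C) : Prop := h_initial O /\ v_terminal O.

(* stable: square |-> top-left span  and  square |-> bottom-right cospan are bijections *)
Definition stable_dc : Prop :=
  (forall s s' : Sq C, top s = top s' -> left s = left s' -> s = s') /\
  (forall (f : Hor C) (g : Ver C), hsrc f = vsrc g ->
      exists s : Sq C, top s = f /\ left s = g) /\
  (forall s s' : Sq C, right s = right s' -> bottom s = bottom s' -> s = s') /\
  (forall (g : Ver C) (f : Hor C), vtgt g = htgt f ->
      exists s : Sq C, right s = g /\ bottom s = f).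

Definition flat : Prop :=
  forall s s' : Sq C, top s = top s' -> left s = left s' -> right s = right s' ->
    bottom s = bottom s' -> s = s'.

Definition squares_category (O : Ob C) : Prop := flat /\ h_initial O /\ v_terminal O.

Definition vwe (O : Ob C) (f : Ver C) : Prop :=
  forall t b : Hor C, hsrc t = O -> htgt t = vsrc f -> hsrc b = O -> htgt b = vtgt f ->
    is_square t (vid O) f b.

(* A double functor box -> C is a square of C (box is generated by one square);
   a double functor span -> C is a span, and cospan -> C a cospan of C.
   Morphisms are vertical natural transformations, given by their components. *)

Record Span := mkSpan { sp_h : Hor C; sp_v : Ver C }.
Record Cospan := mkCospan { co_v : Ver C; co_h : Hor C }.
Definition is_span (X : Span) : Prop := hsrc (sp_h X) = vsrc (sp_v X).
Definition is_cospan (X : Cospan) : Prop := vtgt (co_v X) = htgt (co_h X).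

Record Mor4 := mkMor4 { n_a : Ver C; n_b : Ver C; n_c : Ver C; n_d : Ver C }.
Record Mor3 := mkMor3 { m_a : Ver C; m_b : Ver C; m_c : Ver C }.
Record CMor3 := mkCMor3 { k_b : Ver C; k_c : Ver C; k_d : Ver C }.

Definition ca (s : Sq C) := hsrc (top s).
Definition cb (s : Sq C) := htgt (top s).
Definition cc (s : Sq C) := vtgt (left s).
Definition cd (s : Sq C) := htgt (bottom s).

(* components of a vertical natural transformation between two double functors
   box -> C (given by squares s, s') *)
Definition vnat_comp_ok (x x' : Ob C) (tau : Ver C) : Prop :=
  vsrc tau = x /\ vtgt tau = x' /\
  is_square (hid x) tau tau (hid x') /\              (* horizontal identity of box *)
  vcomp (vid x) tau = vcomp tau (vid x').            (* vertical identity of box *)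

Definition sq_mor (s s' : Sq C) (t : Mor4) : Prop :=
  vnat_comp_ok (ca s) (ca s') (n_a t) /\ vnat_comp_ok (cb s) (cb s') (n_b t) /\
  vnat_comp_ok (cc s) (cc s') (n_c t) /\ vnat_comp_ok (cd s) (cd s') (n_d t) /\
  is_square (top s) (n_a t) (n_b t) (top s') /\            (* horizontal a >-> b *)
  is_square (bottom s) (n_c t) (n_d t) (bottom s') /\      (* horizontal c >-> d *)
  vcomp (left s) (n_c t) = vcomp (n_a t) (left s') /\      (* vertical a ->> c *)
  vcomp (right s) (n_d t) = vcomp (n_b t) (right s').      (* vertical b ->> d *)

Definition id4 (s : Sq C) : Mor4 := mkMor4 (vid (ca s)) (vid (cb s)) (vid (cc s)) (vid (cd s)).
Definition comp4 (t u : Mor4) : Mor4 :=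
  mkMor4 (vcomp (n_a t) (n_a u)) (vcomp (n_b t) (n_b u))
         (vcomp (n_c t) (n_c u)) (vcomp (n_d t) (n_d u)).

Definition spa (X : Span) := hsrc (sp_h X).
Definition spb (X : Span) := htgt (sp_h X).
Definition spc (X : Span) := vtgt (sp_v X).
Definition span_mor (X Y : Span) (t : Mor3) : Prop :=
  vnat_comp_ok (spa X) (spa Y) (m_a t) /\ vnat_comp_ok (spb X) (spb Y) (m_b t) /\
  vnat_comp_ok (spc X) (spc Y) (m_c t) /\
  is_square (sp_h X) (m_a t) (m_b t) (sp_h Y) /\
  vcomp (sp_v X) (m_c t) = vcomp (m_a t) (sp_v Y).
Definition id3 (X : Span) : Mor3 := mkMor3 (vid (spa X)) (vid (spb X)) (vid (spc X)).
Definition comp3 (t u : Mor3) : Mor3 :=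
  mkMor3 (vcomp (m_a t) (m_a u)) (vcomp (m_b t) (m_b u)) (vcomp (m_c t) (m_c u)).

Definition cob (X : Cospan) := vsrc (co_v X).
Definition coc (X : Cospan) := hsrc (co_h X).
Definition cod (X : Cospan) := htgt (co_h X).
Definition cospan_mor (X Y : Cospan) (t : CMor3) : Prop :=
  vnat_comp_ok (cob X) (cob Y) (k_b t) /\ vnat_comp_ok (coc X) (coc Y) (k_c t) /\
  vnat_comp_ok (cod X) (cod Y) (k_d t) /\
  is_square (co_h X) (k_c t) (k_d t) (co_h Y) /\
  vcomp (co_v X) (k_d t) = vcomp (k_b t) (co_v Y).
Definition cid3 (X : Cospan) : CMor3 := mkCMor3 (vid (cob X)) (vid (coc X)) (vid (cod X)).
Definition ccomp3 (t u : CMor3) : CMor3 :=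
  mkCMor3 (vcomp (k_b t) (k_b u)) (vcomp (k_c t) (k_c u)) (vcomp (k_d t) (k_d u)).

(* the restriction functors i^* and j^* *)
Definition istar (s : Sq C) : Span := mkSpan (top s) (left s).
Definition istar_mor (t : Mor4) : Mor3 := mkMor3 (n_a t) (n_b t) (n_c t).
Definition jstar (s : Sq C) : Cospan := mkCospan (right s) (bottom s).
Definition jstar_mor (t : Mor4) : CMor3 := mkCMor3 (n_b t) (n_c t) (n_d t).

Definition section_i (sO : Span -> Sq C) (sM : Span -> Span -> Mor3 -> Mor4) : Prop :=
  (forall X, is_span X -> istar (sO X) = X) /\
  (forall X Y t, is_span X -> is_span Y -> span_mor X Y t ->
      sq_mor (sO X) (sO Y) (sM X Y t) /\ istar_mor (sM X Y t) = t) /\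
  (forall X, is_span X -> sM X X (id3 X) = id4 (sO X)) /\
  (forall X Y Z t u, is_span X -> is_span Y -> is_span Z ->
      span_mor X Y t -> span_mor Y Z u ->
      sM X Z (comp3 t u) = comp4 (sM X Y t) (sM Y Z u)).

Definition nat_w (sO : Span -> Sq C) (sM : Span -> Span -> Mor3 -> Mor4)
    (w : Sq C -> Mor4) : Prop :=
  (forall s, sq_mor (sO (istar s)) s (w s)) /\
  (forall s, n_a (w s) = vid (ca s) /\ n_b (w s) = vid (cb s) /\ n_c (w s) = vid (cc s)) /\
  (forall s s' t, sq_mor s s' t ->
      comp4 (w s) t = comp4 (sM (istar s) (istar s') (istar_mor t)) (w s')).

Definition section_j (tO : Cospan -> Sq C) (tM : Cospan -> Cospan -> CMor3 -> Mor4) : Prop :=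
  (forall X, is_cospan X -> jstar (tO X) = X) /\
  (forall X Y t, is_cospan X -> is_cospan Y -> cospan_mor X Y t ->
      sq_mor (tO X) (tO Y) (tM X Y t) /\ jstar_mor (tM X Y t) = t) /\
  (forall X, is_cospan X -> tM X X (cid3 X) = id4 (tO X)) /\
  (forall X Y Z t u, is_cospan X -> is_cospan Y -> is_cospan Z ->
      cospan_mor X Y t -> cospan_mor Y Z u ->
      tM X Z (ccomp3 t u) = comp4 (tM X Y t) (tM Y Z u)).

Definition nat_u (O : Ob C) (tO : Cospan -> Sq C) (tM : Cospan -> Cospan -> CMor3 -> Mor4)
    (u : Sq C -> Mor4) : Prop :=
  (forall s, sq_mor (tO (jstar s)) s (u s)) /\
  (forall s, n_b (u s) = vid (cb s) /\ n_c (u s) = vid (cc s) /\ n_d (u s) = vid (cd s)) /\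
  (forall s, vwe O (n_a (u s))) /\
  (forall s s' t, sq_mor s s' t ->
      comp4 (u s) t = comp4 (tM (jstar s) (jstar s') (jstar_mor t)) (u s')).

Definition stable_squares_category (O : Ob C) : Prop :=
  squares_category O /\
  (exists sO sM, section_i sO sM /\ exists w, nat_w sO sM w) /\
  (exists tO tM, section_j tO tM /\ exists u, nat_u O tO tM u).

End Defs.

(* Main.v *)
Require Import Defs.
From Stdlib Require Import ClassicalEpsilon.

Definition fill (C : DoubleCat) (f : Hor C) (g : Ver C) : Sq C :=
  epsilon (inhabits (sq_vid C f)) (fun s => top s = f /\ left s = g).
Definition cofill (C : DoubleCat) (g : Ver C) (f : Hor C) : Sq C :=
  epsilon (inhabits (sq_vid C f)) (fun s => right s = g /\ bottom s = f).

Lemma fill_spec (C : DoubleCat) f g : stable_dc C -> hsrc f = vsrc g ->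
  top (fill C f g) = f /\ left (fill C f g) = g.
Proof.
  intros [_ [Hs _]] H. unfold fill. apply epsilon_spec. apply Hs; exact H.
Qed.

Lemma fill_uniq (C : DoubleCat) f g s : stable_dc C -> top s = f -> left s = g ->
  fill C f g = s.
Proof.
  intros Hst Ht Hl. assert (H : hsrc f = vsrc g) by (subst; apply bd_a).
  destruct (fill_spec C f g Hst H) as [H1 H2].
  destruct Hst as [Hi _]. apply Hi; congruence.
Qed.

Lemma cofill_spec (C : DoubleCat) g f : stable_dc C -> vtgt g = htgt f ->
  right (cofill C g f) = g /\ bottom (cofill C g f) = f.
Proof.
  intros [_ [_ [_ Hs]]] H. unfold cofill. apply epsilon_spec. apply Hs; exact H.
Qed.

Lemma cofill_uniq (C : DoubleCat) g f s : stable_dc C -> right s = g -> bottom s = f ->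
  cofill C g f = s.
Proof.
  intros Hst Ht Hl. assert (H : vtgt g = htgt f) by (subst; symmetry; apply bd_d).
  destruct (cofill_spec C g f Hst H) as [H1 H2].
  destruct Hst as [_ [_ [Hi _]]]. apply Hi; congruence.
Qed.

Lemma vidl (C : DoubleCat) (A : Ob C) g : vsrc g = A -> vcomp (vid A) g = g.
Proof. intros H; subst; apply vcomp_idl. Qed.
Lemma vidr (C : DoubleCat) (A : Ob C) g : vtgt g = A -> vcomp g (vid A) = g.
Proof. intros H; subst; apply vcomp_idr. Qed.

Lemma vnat_ok (C : DoubleCat) (x x' : Ob C) tau : vsrc tau = x -> vtgt tau = x' ->
  vnat_comp_ok C x x' tau.
Proof.
  intros H1 H2. split; [exact H1|split; [exact H2|split]].
  - exists (sq_hid C tau). destruct (sq_hid_bd C tau) as [a [b [c d]]].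
    rewrite a, b, c, d, H1, H2. auto.
  - rewrite (vidl C x tau H1), (vidr C x' tau H2). reflexivity.
Qed.

Lemma sq_mor_id (C : DoubleCat) (s : Sq C) : sq_mor s s (id4 C s).
Proof.
  unfold sq_mor, id4, ca, cb, cc, cd; simpl.
  refine (conj _ (conj _ (conj _ (conj _ (conj _ (conj _ (conj _ _)))))));
    try (apply vnat_ok; first [apply vsrc_id | apply vtgt_id]).
  - exists (sq_vid C (top s)). destruct (sq_vid_bd C (top s)) as [a [b [c d]]]. auto.
  - exists (sq_vid C (bottom s)). destruct (sq_vid_bd C (bottom s)) as [a [b [c d]]].
    rewrite c, d, bd_c. auto.
  - rewrite (vidr C _ (left s) eq_refl), (vidl C _ (left s) (eq_sym (bd_a C s))). reflexivity.
  - rewrite (vidr C _ (right s) (eq_sym (bd_d C s))), (vidl C _ (right s) (eq_sym (bd_b C s))).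
    reflexivity.
Qed.

Definition sO (C : DoubleCat) (X : Span C) : Sq C := fill C (sp_h X) (sp_v X).
Definition sM (C : DoubleCat) (X Y : Span C) (t : Mor3 C) : Mor4 C :=
  mkMor4 C (m_a t) (m_b t) (m_c t) (right (fill C (bottom (sO C X)) (m_c t))).
Definition tO (C : DoubleCat) (X : Cospan C) : Sq C := cofill C (co_v X) (co_h X).
Definition tM (C : DoubleCat) (X Y : Cospan C) (t : CMor3 C) : Mor4 C :=
  mkMor4 C (left (cofill C (k_b t) (top (tO C Y)))) (k_b t) (k_c t) (k_d t).

Lemma sO_spec (C : DoubleCat) X : stable_dc C -> is_span X ->
  top (sO C X) = sp_h X /\ left (sO C X) = sp_v X.
Proof. intros Hst HX. apply fill_spec; assumption. Qed.

Lemma tO_spec (C : DoubleCat) X : stable_dc C -> is_cospan X ->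
  right (tO C X) = co_v X /\ bottom (tO C X) = co_h X.
Proof. intros Hst HX. apply cofill_spec; assumption. Qed.

Lemma sO_istar (C : DoubleCat) s : stable_dc C -> sO C (istar C s) = s.
Proof. intros Hst. unfold sO, istar; simpl. apply fill_uniq; auto. Qed.

Lemma tO_jstar (C : DoubleCat) s : stable_dc C -> tO C (jstar C s) = s.
Proof. intros Hst. unfold tO, jstar; simpl. apply cofill_uniq; auto. Qed.

Lemma sM_key (C : DoubleCat) X Y t : stable_dc C -> is_span X -> is_span Y -> span_mor X Y t ->
  top (fill C (bottom (sO C X)) (m_c t)) = bottom (sO C X) /\
  left (fill C (bottom (sO C X)) (m_c t)) = m_c t /\
  bottom (fill C (bottom (sO C X)) (m_c t)) = bottom (sO C Y) /\
  vcomp (right (sO C X)) (right (fill C (bottom (sO C X)) (m_c t)))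
    = vcomp (m_b t) (right (sO C Y)).
Proof.
  intros Hst HX HY [Ha [Hb [Hc [[Q [Qt [Ql [Qr Qb]]]] Hv]]]].
  destruct (sO_spec C X Hst HX) as [sXt sXl].
  destruct (sO_spec C Y Hst HY) as [sYt sYl].
  destruct Hc as [Hc1 [Hc2 _]].
  assert (HR : hsrc (bottom (sO C X)) = vsrc (m_c t)).
  { rewrite bd_c, sXl, Hc1. reflexivity. }
  destruct (fill_spec C _ _ Hst HR) as [Rt Rl].
  set (R := fill C (bottom (sO C X)) (m_c t)) in *.
  assert (c2 : bottom Q = top (sO C Y)) by (rewrite Qb, sYt; reflexivity).
  destruct (sq_vcomp_bd C (sO C X) R (eq_sym Rt)) as [l1 [r1 [t1 b1]]].
  destruct (sq_vcomp_bd C Q (sO C Y) c2) as [l2 [r2 [t2 b2]]].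
  assert (E : sq_vcomp C (sO C X) R = sq_vcomp C Q (sO C Y)).
  { destruct Hst as [Hi _]. apply Hi.
    - rewrite t1, t2, sXt, Qt. reflexivity.
    - rewrite l1, l2, sXl, Rl, Ql, sYl. exact Hv. }
  split; [exact Rt|split; [exact Rl|split]].
  - rewrite <- b1, <- b2, E. reflexivity.
  - rewrite <- r1, E, r2, Qr. reflexivity.
Qed.

Lemma tM_key (C : DoubleCat) X Y t : stable_dc C -> is_cospan X -> is_cospan Y -> cospan_mor X Y t ->
  right (cofill C (k_b t) (top (tO C Y))) = k_b t /\
  bottom (cofill C (k_b t) (top (tO C Y))) = top (tO C Y) /\
  top (cofill C (k_b t) (top (tO C Y))) = top (tO C X) /\
  vcomp (left (cofill C (k_b t) (top (tO C Y)))) (left (tO C Y))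
    = vcomp (left (tO C X)) (k_c t).
Proof.
  intros Hst HX HY [Hb [Hc [Hd [[Q [Qt [Ql [Qr Qb]]]] Hv]]]].
  destruct (tO_spec C X Hst HX) as [sXr sXb].
  destruct (tO_spec C Y Hst HY) as [sYr sYb].
  destruct Hb as [Hb1 [Hb2 _]].
  assert (HR : vtgt (k_b t) = htgt (top (tO C Y))).
  { rewrite bd_b, sYr, Hb2. reflexivity. }
  destruct (cofill_spec C _ _ Hst HR) as [Rr Rb].
  set (R := cofill C (k_b t) (top (tO C Y))) in *.
  assert (c2 : bottom (tO C X) = top Q) by (rewrite Qt, sXb; reflexivity).
  destruct (sq_vcomp_bd C R (tO C Y) Rb) as [l1 [r1 [t1 b1]]].
  destruct (sq_vcomp_bd C (tO C X) Q c2) as [l2 [r2 [t2 b2]]].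
  assert (E : sq_vcomp C R (tO C Y) = sq_vcomp C (tO C X) Q).
  { destruct Hst as [_ [_ [Hi _]]]. apply Hi.
    - rewrite r1, r2, sXr, Rr, Qr, sYr. symmetry. exact Hv.
    - rewrite b1, b2, sYb, Qb. reflexivity. }
  split; [exact Rr|split; [exact Rb|split]].
  - rewrite <- t1, E, t2. reflexivity.
  - rewrite <- l1, E, l2, Ql. reflexivity.
Qed.

Lemma sO_corners (C : DoubleCat) X : stable_dc C -> is_span X ->
  ca C (sO C X) = spa X /\ cb C (sO C X) = spb X /\ cc C (sO C X) = spc X.
Proof.
  intros Hst HX. destruct (sO_spec C X Hst HX) as [a b].
  unfold ca, cb, cc, spa, spb, spc. rewrite a, b. auto.
Qed.

Lemma sec_i (C : DoubleCat) : stable_dc C -> section_i (sO C) (sM C).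
Proof.
  intros Hst. split; [|split; [|split]].
  - intros X HX. destruct (sO_spec C X Hst HX) as [a b]. unfold istar.
    rewrite a, b. destruct X; reflexivity.
  - intros X Y t HX HY Ht.
    destruct (sM_key C X Y t Hst HX HY Ht) as [Rt [Rl [Rb Rr]]].
    destruct (sO_corners C X Hst HX) as [xa [xb xc]].
    destruct (sO_corners C Y Hst HY) as [ya [yb yc]].
    destruct (sO_spec C X Hst HX) as [sXt sXl].
    destruct (sO_spec C Y Hst HY) as [sYt sYl].
    pose proof Ht as Ht'.
    destruct Ht' as [Ha [Hb [Hc [Q Hv]]]].
    split; [|destruct t; reflexivity].
    unfold sq_mor, sM; simpl.
    rewrite xa, xb, xc, ya, yb, yc, sXt, sYt.
    split; [exact Ha|split; [exact Hb|split; [exact Hc|split; [|split; [exact Q|split; [|split]]]]]].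
    + apply vnat_ok.
      * rewrite <- bd_b, Rt. reflexivity.
      * rewrite <- bd_d, Rb. reflexivity.
    + exists (fill C (bottom (sO C X)) (m_c t)). auto.
    + rewrite sXl, sYl. exact Hv.
    + exact Rr.
  - intros X HX. destruct (sO_corners C X Hst HX) as [xa [xb xc]].
    unfold sM, id3, id4; simpl. rewrite xa, xb, xc. f_equal.
    rewrite (fill_uniq C _ _ (sq_vid C (bottom (sO C X))) Hst).
    + destruct (sq_vid_bd C (bottom (sO C X))) as [_ [_ [_ d]]]. exact d.
    + destruct (sq_vid_bd C (bottom (sO C X))) as [a _]. exact a.
    + destruct (sq_vid_bd C (bottom (sO C X))) as [_ [_ [c _]]]. rewrite c, bd_c.
      rewrite <- xc. reflexivity.
  - intros X Y Z t u HX HY HZ Ht Hu.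
    destruct (sM_key C X Y t Hst HX HY Ht) as [Rt [Rl [Rb Rr]]].
    destruct (sM_key C Y Z u Hst HY HZ Hu) as [Rt' [Rl' [Rb' Rr']]].
    unfold sM, comp3, comp4; simpl. f_equal.
    set (R1 := fill C (bottom (sO C X)) (m_c t)) in *.
    set (R2 := fill C (bottom (sO C Y)) (m_c u)) in *.
    assert (c : bottom R1 = top R2) by congruence.
    destruct (sq_vcomp_bd C R1 R2 c) as [l1 [r1 [t1 b1]]].
    rewrite (fill_uniq C _ _ (sq_vcomp C R1 R2) Hst).
    + exact r1.
    + rewrite t1. exact Rt.
    + rewrite l1, Rl, Rl'. reflexivity.
Qed.

Lemma tO_corners (C : DoubleCat) X : stable_dc C -> is_cospan X ->
  cb C (tO C X) = cob X /\ cc C (tO C X) = coc X /\ cd C (tO C X) = cod X.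
Proof.
  intros Hst HX. destruct (tO_spec C X Hst HX) as [a b].
  unfold cb, cc, cd, cob, coc, cod. rewrite bd_b, <- bd_c, a, b. auto.
Qed.

Lemma sec_j (C : DoubleCat) : stable_dc C -> section_j (tO C) (tM C).
Proof.
  intros Hst. split; [|split; [|split]].
  - intros X HX. destruct (tO_spec C X Hst HX) as [a b]. unfold jstar.
    rewrite a, b. destruct X; reflexivity.
  - intros X Y t HX HY Ht.
    destruct (tM_key C X Y t Hst HX HY Ht) as [Rr [Rb [Rt Rl]]].
    destruct (tO_corners C X Hst HX) as [xb [xc xd]].
    destruct (tO_corners C Y Hst HY) as [yb [yc yd]].
    destruct (tO_spec C X Hst HX) as [sXr sXb].
    destruct (tO_spec C Y Hst HY) as [sYr sYb].
    pose proof Ht as Ht'.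
    destruct Ht' as [Hb [Hc [Hd [Q Hv]]]].
    split; [|destruct t; reflexivity].
    unfold sq_mor, tM; simpl.
    rewrite xb, xc, xd, yb, yc, yd, sXr, sYr, sXb, sYb.
    split; [|split; [exact Hb|split; [exact Hc|split; [exact Hd|split; [|split; [exact Q|split; [|]]]]]]].
    + apply vnat_ok.
      * unfold ca. rewrite <- bd_a, Rt. reflexivity.
      * unfold ca. rewrite <- bd_c, Rb. reflexivity.
    + exists (cofill C (k_b t) (top (tO C Y))). auto.
    + symmetry. exact Rl.
    + exact Hv.
  - intros X HX. destruct (tO_corners C X Hst HX) as [xb [xc xd]].
    unfold tM, cid3, id4; simpl. rewrite xb, xc, xd. f_equal.
    rewrite (cofill_uniq C _ _ (sq_vid C (top (tO C X))) Hst).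
    + destruct (sq_vid_bd C (top (tO C X))) as [_ [_ [c _]]]. exact c.
    + destruct (sq_vid_bd C (top (tO C X))) as [_ [_ [_ d]]]. rewrite d.
      rewrite <- xb. reflexivity.
    + destruct (sq_vid_bd C (top (tO C X))) as [_ [b _]]. exact b.
  - intros X Y Z t u HX HY HZ Ht Hu.
    destruct (tM_key C X Y t Hst HX HY Ht) as [Rr [Rb [Rt Rl]]].
    destruct (tM_key C Y Z u Hst HY HZ Hu) as [Rr' [Rb' [Rt' Rl']]].
    unfold tM, ccomp3, comp4; simpl. f_equal.
    set (R1 := cofill C (k_b t) (top (tO C Y))) in *.
    set (R2 := cofill C (k_b u) (top (tO C Z))) in *.
    assert (c : bottom R1 = top R2) by congruence.
    destruct (sq_vcomp_bd C R1 R2 c) as [l1 [r1 [t1 b1]]].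
    rewrite (cofill_uniq C _ _ (sq_vcomp C R1 R2) Hst).
    + exact l1.
    + rewrite r1, Rr, Rr'. reflexivity.
    + rewrite b1. exact Rb'.
Qed.

Lemma natw (C : DoubleCat) : stable_dc C -> nat_w (sO C) (sM C) (id4 C).
Proof.
  intros Hst. split; [|split].
  - intros s. rewrite sO_istar by exact Hst. apply sq_mor_id.
  - intros s. unfold id4; simpl. auto.
  - intros s s' t Ht.
    destruct Ht as [[a1 [a2 _]] [[b1 [b2 _]] [[c1 [c2 _]] [[d1 [d2 _]] [_ [Q _]]]]]].
    unfold comp4, sM, id4, istar_mor; simpl. rewrite sO_istar by exact Hst.
    rewrite (vidl C _ _ a1), (vidl C _ _ b1), (vidl C _ _ c1), (vidl C _ _ d1),
      (vidr C _ _ a2), (vidr C _ _ b2), (vidr C _ _ c2).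
    destruct Q as [q [qt [ql [qr qb]]]].
    rewrite (fill_uniq C _ _ q Hst qt ql), qr, (vidr C _ _ d2). reflexivity.
Qed.

Lemma natu (C : DoubleCat) (O : Ob C) : h_initial C O -> stable_dc C ->
  nat_u O (tO C) (tM C) (id4 C).
Proof.
  intros Hin Hst. split; [|split; [|split]].
  - intros s. rewrite tO_jstar by exact Hst. apply sq_mor_id.
  - intros s. unfold id4; simpl. auto.
  - intros s tt b H1 H2 H3 H4. unfold id4 in *; simpl in *.
    rewrite vsrc_id in H2. rewrite vtgt_id in H4.
    destruct (Hin (ca C s)) as [_ U].
    assert (E : tt = b) by (apply U; assumption). subst b.
    exists (sq_vid C tt). destruct (sq_vid_bd C tt) as [a [b [c d]]].
    rewrite a, b, c, d, H1, H2. auto.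
  - intros s s' t Ht.
    destruct Ht as [[a1 [a2 _]] [[b1 [b2 _]] [[c1 [c2 _]] [[d1 [d2 _]] [Q _]]]]].
    unfold comp4, tM, id4, jstar_mor; simpl. rewrite tO_jstar by exact Hst.
    rewrite (vidl C _ _ a1), (vidl C _ _ b1), (vidl C _ _ c1), (vidl C _ _ d1),
      (vidr C _ _ b2), (vidr C _ _ c2), (vidr C _ _ d2).
    destruct Q as [q [qt [ql [qr qb]]]].
    rewrite (cofill_uniq C _ _ q Hst qr qb), ql, (vidr C _ _ a2). reflexivity.
Qed.

Theorem proposition3p11 (C : DoubleCat) (O : Ob C) :
  pointed C O -> stable_dc C -> stable_squares_category C O.
Proof.
  intros [Hin Hter] Hst. split; [|split].
  - split; [|split; assumption].
    intros s s' Ht Hl _ _. destruct Hst as [Hi _]. apply Hi; assumption.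
  - exists (sO C), (sM C). split; [apply sec_i; exact Hst|].
    exists (id4 C). apply natw; exact Hst.
  - exists (tO C), (tM C). split; [apply sec_j; exact Hst|].
    exists (id4 C). apply natu; assumption.
Qed.
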